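(* Let $(\varpi,\nu)$ be sub-consistent, where $\varpi$ is a finite measure on $\mathcal X\times\mathcal X$ and $\nu$ a probability measure on $\mathcal X\times\mathcal X^*$ with $\int n\,d\nu<\infty$. Then there exists a sequence $(\hat\varpi_n,\hat\nu_n)\in\mathcal M_s$ such that (i) each $(\hat\varpi_n,\hat\nu_n)$ is consistent, and (ii) $(\hat\varpi_n,\hat\nu_n)\to(\varpi,\nu)$ as $n\to\infty$.
   Context: $\mathcal X$ is a finite alphabet, $\mathcal X^*=\bigcup_{n\ge0}\{n\}\times\mathcal X^n$ with elements $c=(n,a_1,\dots,a_n)$, $m(a,c)=\sum_i\mathbf 1\{a_i=a\}$. $(\varpi,\nu)$ is sub-consistent if $\varpi(a,b)\ge\sum_{c\in\mathcal X^*}m(b,c)\nu(a,c)$ for all $a,b\in\mathcal X$, consistent if equality holds for all $a,b$. $\mathcal M_s$ is the set of sub-consistent pairs in (finite measures on $\mathcal X\times\mathcal X$) $\times$ (probability measures $\nu$ on $\mathcal X\times\mathcal X^*$ with $\int n\,d\nu<\infty$), with the weak topology; convergence is in this topology. *)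

(* Defs.v *)
From HB Require Import structures.
From mathcomp Require Import all_boot all_order all_algebra.
From mathcomp Require Import all_classical all_reals all_analysis.
Set Implicit Arguments. Unset Strict Implicit. Unset Printing Implicit Defensive.
Import Order.TTheory GRing.Theory Num.Theory.
Import numFieldNormedType.Exports.
Local Open Scope classical_set_scope.
Local Open Scope ring_scope.

(* X^* = \bigcup_{n>=0} {n} x X^n : elements c = (n, a_1, ..., a_n). *)
Definition Xstar (X : finType) : Type := {n : nat & n.-tuple X}.

Definition xlen (X : finType) (c : Xstar X) : nat := projT1 c.

Definition mult (X : finType) (a : X) (c : Xstar X) : nat :=
  count_mem a (tval (projT2 c)).

(* A finite measure on X x X (X finite, discrete): a nonnegative mass function. *)
Definition finmeasXX (R : realType) (X : finType) (w : X -> X -> R) : Prop :=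
  forall a b, 0 <= w a b.

(* A probability measure on the countable discrete space X x X^*,
   given by its (nonnegative, total mass 1) mass function. *)
Definition probXXs (R : realType) (X : finType) (nu : X -> Xstar X -> R) : Prop :=
  (forall a c, 0 <= nu a c) /\
  (\esum_(t in [set: X * Xstar X]) (nu t.1 t.2)%:E = 1)%E.

Definition finite_mean_len (R : realType) (X : finType) (nu : X -> Xstar X -> R) : Prop :=
  (\esum_(t in [set: X * Xstar X]) ((xlen t.2)%:R * nu t.1 t.2)%:E < +oo)%E.

Definition msum (R : realType) (X : finType) (nu : X -> Xstar X -> R) (a b : X) : \bar R :=
  \esum_(c in [set: Xstar X]) ((mult b c)%:R * nu a c)%:E.

Definition sub_consistent (R : realType) (X : finType)
  (w : X -> X -> R) (nu : X -> Xstar X -> R) : Prop :=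
  forall a b, (msum nu a b <= (w a b)%:E)%E.

Definition consistent (R : realType) (X : finType)
  (w : X -> X -> R) (nu : X -> Xstar X -> R) : Prop :=
  forall a b, msum nu a b = (w a b)%:E.

Definition in_Ms (R : realType) (X : finType)
  (w : X -> X -> R) (nu : X -> Xstar X -> R) : Prop :=
  [/\ finmeasXX w, probXXs nu, finite_mean_len nu & sub_consistent w nu].

Definition integ (R : realType) (X : finType)
  (nu : X -> Xstar X -> R) (f : X -> Xstar X -> R) : R :=
  fine (\esum_(t in [set: X * Xstar X]) ((Num.max (f t.1 t.2) 0) * nu t.1 t.2)%:E)%E
  - fine (\esum_(t in [set: X * Xstar X]) ((Num.max (- f t.1 t.2) 0) * nu t.1 t.2)%:E)%E.

(* Weak convergence of measures on the discrete space X x X^*: every bounded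
   (hence continuous) function is integrated convergently. *)
Definition weak_cvg (R : realType) (X : finType)
  (nus : nat -> X -> Xstar X -> R) (nu : X -> Xstar X -> R) : Prop :=
  forall f : X -> Xstar X -> R, (exists M : R, forall a c, `|f a c| <= M) ->
    (fun k => integ (nus k) f) @ \oo --> integ nu f.

(* Weak convergence of finite measures on the finite discrete space X x X
   (equivalently, convergence of every mass). *)
Definition weak_cvgXX (R : realType) (X : finType)
  (ws : nat -> X -> X -> R) (w : X -> X -> R) : Prop :=
  forall a b, (fun k => ws k a b) @ \oo --> w a b.

(* Main.v *)
Require Import Defs.
From HB Require Import structures.
From mathcomp Require Import all_boot all_order all_algebra.
From mathcomp Require Import all_classical all_reals all_analysis.
From mathcomp Require Import lra.
Import Order.TTheory GRing.Theory Num.Theory.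
Import numFieldNormedType.Exports.
Local Open Scope classical_set_scope.
Local Open Scope ring_scope.

Section Aux.
Variable R : realType.

Lemma esumZ (T : choiceType) (S : set T) (a : T -> \bar R) (c : R) :
  0 <= c -> (forall x, S x -> (0 <= a x)%E) ->
  (\esum_(i in S) (c%:E * a i) = c%:E * \esum_(i in S) a i)%E.
Proof.
move=> c0 a0; rewrite /esum -ereal_supZl//; last first.
  by apply/set0P; exists 0%E; exists set0 => //; [exact: fsets_set0|rewrite fsbig_set0].
congr ereal_sup; apply/seteqP; split=> x /=.
  move=> [A [finA AS] <-]; exists (\sum_(i \in A) a i)%E; first by exists A.
  rewrite !fsbig_finite// !big_seq ge0_sume_distrr// => i.
  by rewrite in_fset_set// inE => /AS /a0.
move=> [y [A [finA AS] <-] <-]; exists A => //.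
rewrite !fsbig_finite// !big_seq ge0_sume_distrr// => i.
by rewrite in_fset_set// inE => /AS /a0.
Qed.

Lemma esum_point (T : choiceType) (t0 : T) (v : R) : 0 <= v ->
  (\esum_(t in [set: T]) ((t == t0)%:R * v)%:E = v%:E)%E.
Proof.
move=> v0; rewrite (_ : v%:E = \esum_(t in [set t0]) ((t == t0)%:R * v)%:E)%E; last first.
  by rewrite esum_set1 ?eqxx ?mul1r ?lee_fin.
rewrite [RHS]esum_mkcond; apply: eq_esum => t _.
case: eqP => [->|ne]; first by rewrite mem_set.
rewrite memNset ?mul0r //.
Qed.


Lemma esum_mix (T : choiceType) (I : choiceType) (s : seq I) (h : I -> T) (v : I -> R)
  (g p : T -> R) (e : R) :
  0 <= e -> (forall t, 0 <= g t) -> (forall t, 0 <= p t) -> (forall i, 0 <= v i) ->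
  (\esum_(t in [set: T]) (g t * p t)%:E)%E \is a fin_num ->
  (\esum_(t in [set: T]) (g t * (e * p t + \sum_(i <- s) (t == h i)%:R * v i))%:E =
   (e * fine (\esum_(t in [set: T]) (g t * p t)%:E) + \sum_(i <- s) g (h i) * v i)%:E)%E.
Proof.
move=> e0 g0 p0 v0 fin.
transitivity (\esum_(t in [set: T]) ((e%:E * (g t * p t)%:E) +
   \sum_(i <- s) ((t == h i)%:R * (g (h i) * v i))%:E))%E.
  apply: eq_esum => t _; rewrite sumEFin -EFinM -EFinD; congr EFin.
  rewrite mulrDr mulrCA; congr (_ + _); rewrite big_distrr; apply: eq_bigr => i _.
  change (g t * ((t == h i)%:R * v i) = (t == h i)%:R * (g (h i) * v i)).
  rewrite mulrCA; case E: (t == h i); last by rewrite !mul0r.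
  by move/eqP: E => ->.
rewrite esumD; last 2 first.
- by move=> t _; rewrite mule_ge0// lee_fin ?mulr_ge0.
- by move=> t _; rewrite sume_ge0// => i _; rewrite lee_fin mulr_ge0 ?mulr_ge0.
rewrite esumZ//; last by move=> t _; rewrite lee_fin mulr_ge0.
rewrite (@esum_sum _ _ _ _ s xpredT (fun t i => ((t == h i)%:R * (g (h i) * v i))%:E)); last first.
  by move=> t i _ _; rewrite lee_fin mulr_ge0 ?mulr_ge0.
under eq_bigr do rewrite esum_point ?mulr_ge0//.
by rewrite sumEFin -(fineK fin) -EFinM -EFinD fineK.
Qed.
End Aux.

Lemma cvg_approx (R : realType) (x : nat -> R) (L C : R) :
  (forall k, `|x k - L| <= C * k.+1%:R^-1) -> x @ \oo --> L.
Proof.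
move=> H.
have Hp : (fun k => L + C * k.+1%:R^-1) @ \oo --> L + C * 0.
  apply: cvgD; first exact: cvg_cst.
  by apply: cvgM; [exact: cvg_cst|exact: (@cvg_harmonic R)].
have Hm : (fun k => L - C * k.+1%:R^-1) @ \oo --> L - C * 0.
  apply: cvgB; first exact: cvg_cst.
  by apply: cvgM; [exact: cvg_cst|exact: (@cvg_harmonic R)].
rewrite mulr0 addr0 in Hp; rewrite mulr0 subr0 in Hm.
apply: (squeeze_cvgr _ Hm Hp); near=> k.
by move: (H k); rewrite ler_distl.
Unshelve. all: by end_near.
Qed.

Lemma fin_between (R : realType) (x : \bar R) (y : R) :
  (0 <= x)%E -> (x <= y%:E)%E -> x \is a fin_num /\ 0 <= fine x <= y.
Proof. by case: x => [r| |] //=; rewrite !lee_fin => -> ->. Qed.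

Lemma count_flat (X : finType) (n : X -> nat) (b : X) :
  count_mem b (flatten [seq nseq (n b') b' | b' <- enum X]) = n b.
Proof.
rewrite count_flatten -map_comp sumnE big_map big_enum /=.
rewrite (bigD1 b) //= count_nseq /= eqxx mul1n big1 ?addn0 // => j /negbTE jb.
rewrite count_nseq /=; case: eqP jb => // ->; rewrite eqxx.
Qed.

Section Constr.
Variables (R : realType) (X : finType) (w : X -> X -> R) (nu : X -> Xstar X -> R).

Definition epsk (k : nat) : R := k.+1%:R^-1.
Definition etak k : R := epsk k / #|X|%:R.
Definition FF a b : R := fine (Defs.msum nu a b).
Definition dd a b := w a b - FF a b.
Definition nn k a b : nat := Num.truncn (dd a b / etak k).
Definition mkXs (s : seq X) : Xstar X := existT _ (size s) (in_tuple s).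
Definition cs k a := mkXs (flatten [seq nseq (nn k a b) b | b <- enum X]).
Definition nus k a c := (1 - epsk k) * nu a c +
  \sum_(x <- enum X) ((a, c) == (x, cs k x))%:R * etak k.
Definition ws k a b := (1 - epsk k) * FF a b + etak k * (nn k a b)%:R.

Lemma mult_cs k a b : Defs.mult b (cs k a) = nn k a b.
Proof. exact: count_flat. Qed.

Lemma epsk_ge0 k : 0 <= epsk k. Proof. by rewrite /epsk invr_ge0. Qed.
Lemma epsk_le1 k : epsk k <= 1. Proof. by rewrite /epsk invf_le1 // ler1n. Qed.
Lemma etak_ge0 k : 0 <= etak k. Proof. by rewrite /etak divr_ge0 ?epsk_ge0. Qed.
Lemma e_ge0 k : 0 <= 1 - epsk k. Proof. by rewrite subr_ge0 epsk_le1. Qed.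

Lemma nus_ge0 k a c : (forall a c, 0 <= nu a c) -> 0 <= nus k a c.
Proof.
move=> nu0; rewrite /nus addr_ge0 ?mulr_ge0 ?e_ge0 ?nu0 //.
by rewrite sumr_ge0 // => x _; rewrite mulr_ge0 ?etak_ge0.
Qed.

Lemma esum_nus_pairs k (g : X * Xstar X -> R) :
  (forall a c, 0 <= nu a c) -> (forall t, 0 <= g t) ->
  (\esum_(t in [set: X * Xstar X]) (g t * nu t.1 t.2)%:E)%E \is a fin_num ->
  (\esum_(t in [set: X * Xstar X]) (g t * nus k t.1 t.2)%:E =
   ((1 - epsk k) * fine (\esum_(t in [set: X * Xstar X]) (g t * nu t.1 t.2)%:E)
    + \sum_(x <- enum X) g (x, cs k x) * etak k)%:E)%E.
Proof.
move=> nu0 g0 fin.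
rewrite -(@esum_mix R _ _ (enum X) (fun x => (x, cs k x)) (fun _ => etak k) g
   (fun t => nu t.1 t.2) (1 - epsk k) (e_ge0 k) g0 _ (fun _ => etak_ge0 k) fin).
  by apply: eq_esum => -[a c] _.
by move=> -[a c]; exact: nu0.
Qed.

Lemma esum_nus_a k a (g : Xstar X -> R) :
  (forall a c, 0 <= nu a c) -> (forall t, 0 <= g t) ->
  (\esum_(c in [set: Xstar X]) (g c * nu a c)%:E)%E \is a fin_num ->
  (\esum_(c in [set: Xstar X]) (g c * nus k a c)%:E =
   ((1 - epsk k) * fine (\esum_(c in [set: Xstar X]) (g c * nu a c)%:E)
    + g (cs k a) * etak k)%:E)%E.
Proof.
move=> nu0 g0 fin.
have -> : g (cs k a) * etak k =
    \sum_(x <- enum X) g (cs k x) * ((a == x)%:R * etak k).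
  rewrite big_enum /= (bigD1 a) //= eqxx mul1r big1 ?addr0 // => j /negbTE ja.
  by rewrite eq_sym ja mul0r mulr0.
rewrite -(@esum_mix R _ _ (enum X) (cs k) (fun x => (a == x)%:R * etak k) g
   (nu a) (1 - epsk k) (e_ge0 k) g0) //; last by move=> i; rewrite mulr_ge0 ?etak_ge0.
apply: eq_esum => c _; congr (_ * (_ + _))%:E; apply: eq_bigr => x _.
rewrite xpair_eqE; case: (a == x); case: (c == cs k x); by rewrite ?mul1r ?mul0r.
Qed.

End Constr.
Arguments epsk {R}. Arguments etak {R X}. Arguments FF {R X}. Arguments dd {R X}.
Arguments nn {R X}. Arguments cs {R X}. Arguments nus {R X}. Arguments ws {R X}.
Arguments esum_nus_a {R X}. Arguments esum_nus_pairs {R X}. Arguments mult_cs {R X}.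

Lemma fin_lty (R : realType) (x : \bar R) : (0 <= x)%E -> (x < +oo)%E -> x \is a fin_num.
Proof. by case: x. Qed.

Theorem lemma3p7 (R : realType) (X : finType)
  (w : X -> X -> R) (nu : X -> Xstar X -> R) :
  in_Ms w nu ->
  exists (ws : nat -> X -> X -> R) (nus : nat -> X -> Xstar X -> R),
    (forall k, in_Ms (ws k) (nus k)) /\
    (forall k, consistent (ws k) (nus k)) /\
    weak_cvgXX ws w /\ weak_cvg nus nu.
Proof.
move=> [w0 [nu0 nu1] nufm sc].
have Xne : (0 < #|X|)%N.
  rewrite lt0n; apply/negP => /eqP/card0_eq H0.
  move: nu1; rewrite esum1; last by move=> -[a c] _; have := H0 a; rewrite !inE.
  by move=> /(congr1 fine)/eqP; rewrite /= eq_sym oner_eq0.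
have N0 : (0 < #|X|%:R :> R) by rewrite ltr0n.
have epsk_gt0 k : 0 < @epsk R k by rewrite /epsk invr_gt0 ltr0n.
have etak_gt0 k : 0 < @etak R X k by rewrite /etak divr_gt0.
have etak_le k : @etak R X k <= @epsk R k.
  by rewrite /etak ler_pdivrMr // -[X in X <= _]mulr1 ler_wpM2l ?(ltW (epsk_gt0 k)) // ler1n.
have sumeta k : \sum_(x <- enum X) @etak R X k = @epsk R k.
  by rewrite big_enum /= sumr_const cardT -cardE -mulr_natr /etak mulfVK // gt_eqF.
have msfin a b : Defs.msum nu a b \is a fin_num /\ 0 <= FF nu a b <= w a b.
  apply: fin_between (sc a b); apply: esum_ge0 => c _.
  by rewrite lee_fin mulr_ge0 ?nu0.
exists (ws w nu), (nus w nu).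
have cons k : consistent (ws w nu k) (nus w nu k).
  move=> a b; rewrite /Defs.msum.
  rewrite (esum_nus_a w nu k a (fun c => (Defs.mult b c)%:R)) //; last first.
    exact: (msfin a b).1.
  by rewrite (mult_cs w nu k a b) /ws /FF /Defs.msum (mulrC (etak k)).
have e0 k : 0 <= 1 - @epsk R k := e_ge0 R k.
have nus0 k a c : 0 <= nus w nu k a c by apply: nus_ge0.
split.
  move=> k; split.
  - move=> a b; rewrite /ws addr_ge0 //.
      by rewrite mulr_ge0 ?(e_ge0 R k) //; case/andP: (msfin a b).2.
    by rewrite mulr_ge0 ?(ltW (etak_gt0 k)).
  - split => //.
    transitivity (\esum_(t in [set: X * Xstar X]) ((fun _ => 1) t * nus w nu k t.1 t.2)%:E)%E.
      by apply: eq_esum => t _; rewrite mul1r.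
    rewrite (esum_nus_pairs w nu k (fun _ => 1)) //; last first.
      by under eq_esum do rewrite mul1r; rewrite nu1.
    under eq_esum do rewrite mul1r.
    rewrite nu1 /=; under eq_bigr do rewrite mul1r.
    by rewrite sumeta mulr1 subrK.
  - rewrite /finite_mean_len (esum_nus_pairs w nu k (fun t => (xlen t.2)%:R)) ?ltry //.
    apply: fin_lty nufm; apply: esum_ge0 => t _.
    by rewrite lee_fin mulr_ge0 ?nu0.
  - by move=> a b; rewrite (cons k a b).
split=> //.
split.
  move=> a b; apply: (@cvg_approx R _ _ (FF nu a b + 1)) => k.
  change (k.+1%:R^-1) with (@epsk R k).
  have /andP[F0 Fw] := (msfin a b).2.
  have dd0 : 0 <= dd w nu a b / @etak R X k.
    by apply: divr_ge0; [rewrite /dd subr_ge0 | exact: ltW].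
  move: (truncn_itv dd0) => /andP[h1 h2].
  rewrite ler_pdivlMr // in h1; rewrite ltr_pdivrMr // in h2.
  have eF : 0 <= epsk k * FF nu a b by apply: mulr_ge0; [exact: ltW|].
  have := etak_le k; have := etak_gt0 k.
  rewrite /ws /nn /dd in h1 h2 *.
  move: h1 h2; set n := (Num.truncn _)%:R; set n1 := (Num.truncn _).+1%:R.
  have -> : n1 = n + 1 by rewrite /n1 /n -natr1.
  move=> h1 h2 h3 h4; rewrite ler_norml; apply/andP; split; nra.
move=> f [M fM].
have [a0 _] : exists a : X, a \in X by apply/card_gt0P.
have M0 : 0 <= M := le_trans (normr_ge0 _) (fM a0 (@mkXs X [::])).
have key (g : X * Xstar X -> R) : (forall t, 0 <= g t <= M) -> forall k,
   `|fine (\esum_(t in [set: X * Xstar X]) (g t * nus w nu k t.1 t.2)%:E) -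
     fine (\esum_(t in [set: X * Xstar X]) (g t * nu t.1 t.2)%:E)| <=
   (fine (\esum_(t in [set: X * Xstar X]) (g t * nu t.1 t.2)%:E) + M) * epsk k.
  move=> gM k.
  have g0 t : 0 <= g t by case/andP: (gM t).
  have fin : (\esum_(t in [set: X * Xstar X]) (g t * nu t.1 t.2)%:E)%E \is a fin_num.
    have : (\esum_(t in [set: X * Xstar X]) (g t * nu t.1 t.2)%:E <=
            \esum_(t in [set: X * Xstar X]) (M%:E * (nu t.1 t.2)%:E))%E.
      apply: le_esum => t _; rewrite -EFinM lee_fin ler_wpM2r ?nu0 //.
      by case/andP: (gM t).
    rewrite esumZ //; last by move=> t _; rewrite lee_fin.
    rewrite nu1 mule1 => le; have [] // := @fin_between R _ M _ le.
    by apply: esum_ge0 => t _; rewrite lee_fin mulr_ge0 ?nu0.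
  rewrite (esum_nus_pairs w nu k g) //=.
  set P := fine _; set S := \sum_(_ <- _) _.
  have S0 : 0 <= S by rewrite /S sumr_ge0 // => x _; rewrite mulr_ge0 // ltW.
  have SM : S <= M * epsk k.
    rewrite -(sumeta k) big_distrr /=; apply: ler_sum => x _.
    by rewrite ler_wpM2r ?(ltW (etak_gt0 k)) //; case/andP: (gM (x, cs w nu k x)).
  have P0 : 0 <= P by rewrite /P fine_ge0 // esum_ge0 // => t _; rewrite lee_fin mulr_ge0.
  have := e0 k; have := epsk_gt0 k.
  move=> h1 h2; rewrite ler_norml; apply/andP; split; nra.
have hp : forall t : X * Xstar X, 0 <= Num.max (f t.1 t.2) 0 <= M.
  move=> t; rewrite le_max lexx orbT /= ge_max M0 andbT.
  by have := fM t.1 t.2; rewrite ler_norml => /andP[].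
have hn : forall t : X * Xstar X, 0 <= Num.max (- f t.1 t.2) 0 <= M.
  move=> t; rewrite le_max lexx orbT /= ge_max M0 andbT lerNl.
  by have := fM t.1 t.2; rewrite ler_norml => /andP[].
apply: (@cvg_approx R _ _
  (fine (\esum_(t in [set: X * Xstar X]) (Num.max (f t.1 t.2) 0 * nu t.1 t.2)%:E) + M +
  (fine (\esum_(t in [set: X * Xstar X]) (Num.max (- f t.1 t.2) 0 * nu t.1 t.2)%:E) + M))) => k.
change (k.+1%:R^-1) with (@epsk R k).
have h1 := key _ hp k; have h2 := key _ hn k.
rewrite /integ; move: h1 h2; rewrite /=.
set A := fine _; set B := fine _; set C := fine _; set D := fine _.
have := epsk_gt0 k.
move=> e1 h1 h2; rewrite mulrDl.
move: h1 h2; rewrite !ler_norml => /andP[h1 h1'] /andP[h2 h2'].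
apply/andP; split; lra.
Qed.
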